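(* Let $C_k$ be the last (rightmost) column of the diagram of a composition $(c_1,\dots,c_k)$ of $n$, and let $\mathcal B_k$ be the set of root vectors $x_{i,j}$ with $j$ an entry of $C_k$ and $i$ not an entry of $C_k$ (the last column block of $\mathfrak m$). (i) For every pair $(C,C')$ of neighbouring columns with $C'\neq C_k$, one has $\mathcal B_k\subseteq\mathfrak u_{C,C'}$; hence $\mathcal B_k\subseteq\mathfrak u'$, where $\mathfrak u'$ is the intersection of the $\mathfrak u_{C,C'}$ over all neighbouring pairs $(C,C')$ with $C'\ne C_k$. (ii) If no other column of the diagram has height $c_k$, then $\mathcal B_k\subseteq\mathfrak u_{\pi'}$.
   Context: Let $n\ge 2$, $x_{i,j}$ the $n\times n$ matrix unit with $1$ in position $(i,j)$. A composition $(c_1,\dots,c_k)$ of $n$ determines the standard parabolic subalgebra of block upper triangular matrices with diagonal blocks of sizes $c_1,\dots,c_k$, whose nilradical $\mathfrak m$ is spanned by the $x_{i,j}$, $i<j$ in different blocks. Diagram and tableau: columns $C_1,\dots,C_k$ from left to right, $C_i$ having $c_i$ boxes in rows $R_1,\dots,R_{c_i}$ (rows numbered top to bottom), filled with $1,\dots,n$ so that $C_i$ contains $c_1+\dots+c_{i-1}+1,\dots,c_1+\dots+c_i$, increasing downwards. Two columns of the same height $s$ are neighbouring if no column of height $s$ lies strictly between them. Shifted tableau and $\mathfrak u_{C,C'}$: let $C$ (left) and $C'$ (right) be neighbouring columns of height $s$, and let $N$ be the largest entry of $C'$. Let $D_1,\dots,D_u$ ($u\ge 0$) be the columns of height $>s$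 strictly between $C$ and $C'$, left to right, and $D_0=C$. For a column $D$, let $D^{\le s}$ be the set of entries in its top $s$ boxes and $D^{>s}$ the remaining entries; put $D_{u+1}^{>s}:=\{N\}$. Replace, for $0\le i\le u$, the column $D_i$ by the column with entries $D_i^{\le s}\cup D_{i+1}^{>s}$; replace $C'$ by $C'$ with $N$ removed; leave other columns unchanged. Reading the new columns left to right, each from bottom to top, gives a word $w_{C,C'}$ (a permutation of $1,\dots,n$). $\mathfrak u_{C,C'}$ is the span of the $x_{i,j}$, $i<j$, such that $i$ occurs before $j$ in $w_{C,C'}$. Finally $\mathfrak u_{\pi'}$ is the intersection of the $\mathfrak u_{C,C'}$ over all pairs $(C,C')$ of neighbouring columns. *)

(* Defs.v *)
From mathcomp Require Import all_boot.
Set Implicit Arguments. Unset Strict Implicit. Unset Printing Implicit Defensive.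

(* A composition c = [:: c_1; ...; c_k] of n (all parts positive, sumn c = n).
   Columns are indexed 0 .. k-1 (column C_{m+1} of the paper is index m). *)
Definition composition (n : nat) (c : seq nat) : Prop :=
  all (fun x => 0 < x) c /\ sumn c = n.

Definition ht (c : seq nat) (m : nat) : nat := nth 0 c m.

Definition pre (c : seq nat) (m : nat) : nat := sumn (take m c).

(* entries of column m, listed top to bottom (increasing downwards) *)
Definition col (c : seq nat) (m : nat) : seq nat := iota (pre c m).+1 (ht c m).

Definition neighbouring (c : seq nat) (a b : nat) : Prop :=
  [/\ a < b, b < size c, ht c a = ht c b &
      forall m, a < m < b -> ht c m <> ht c a].

(* the columns D_1,...,D_u strictly between a and b of height > s = ht c a,
   left to right *)
Definition Ds (c : seq nat) (a b : nat) : seq nat :=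
  [seq x <- iota a.+1 (b - a).-1 | ht c a < ht c x].

(* the new column replacing column m in the shifted tableau for (C,C')=(col a, col b),
   listed top to bottom *)
Definition newcol (c : seq nat) (a b m : nat) : seq nat :=
  let s := ht c a in
  let N := pre c b + ht c b in
  if (m == a) || (m \in Ds c a b) then
    (* D_i^{<= s} together with D_{i+1}^{> s}, where D_{u+1}^{> s} = {N} *)
    let m' := head b [seq x <- Ds c a b | m < x] in
    take s (col c m) ++ (if m' == b then [:: N] else drop s (col c m'))
  else if m == b then rem N (col c b)
  else col c m.

(* the word w_{C,C'}: new columns left to right, each read bottom to top *)
Definition word (c : seq nat) (a b : nat) : seq nat :=
  flatten [seq rev (newcol c a b m) | m <- iota 0 (size c)].

(* root vectors x_{i,j} are identified with index pairs (i,j), entries 1..n.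
   u_{C,C'} is the span of x_{i,j}, i<j, i before j in w_{C,C'};
   we record its set of spanning root vectors. *)
Definition in_u (c : seq nat) (a b i j : nat) : Prop :=
  i < j /\ index i (word c a b) < index j (word c a b).

Definition in_u' (c : seq nat) (i j : nat) : Prop :=
  forall a b, neighbouring c a b -> b <> (size c).-1 -> in_u c a b i j.

Definition in_upi' (c : seq nat) (i j : nat) : Prop :=
  forall a b, neighbouring c a b -> in_u c a b i j.

Definition in_Bk (n : nat) (c : seq nat) (i j : nat) : Prop :=
  [/\ 1 <= i <= n, j \in col c (size c).-1 & i \notin col c (size c).-1].

(* Main.v *)
Require Import Defs.
From mathcomp Require Import all_boot.
From mathcomp Require Import zify.
Set Implicit Arguments. Unset Strict Implicit. Unset Printing Implicit Defensive.

Lemma preS c m : m < size c -> pre c m.+1 = pre c m + ht c m.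
Proof. move=> h; rewrite /pre /ht (take_nth 0 h) -cats1 sumn_cat /=; lia. Qed.

Lemma pre_mono c m m' : m <= m' -> pre c m <= pre c m'.
Proof.
move=> h; rewrite /pre -(take_takel c h).
by rewrite -{2}(cat_take_drop m (take m' c)) sumn_cat leq_addr.
Qed.

Lemma mem_col c m x : (x \in col c m) = (pre c m < x <= pre c m + ht c m).
Proof. rewrite /col mem_iota; lia. Qed.

Lemma col_bound c m x : m < (size c).-1 -> x \in col c m -> x <= pre c (size c).-1.
Proof.
move=> hm; rewrite mem_col => /andP[_ h].
have := pre_mono c hm; rewrite preS; lia.
Qed.

Lemma memDs c a b x : a < b ->
  (x \in Ds c a b) = [&& a < x, x < b & ht c a < ht c x].
Proof. move=> ab; rewrite /Ds mem_filter mem_iota.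
case: (ht c a < ht c x); rewrite /= ?andbF ?andbT //; lia. Qed.

Lemma Ds_sorted c a b : sorted ltn (Ds c a b).
Proof. apply: sorted_filter; [exact: ltn_trans | exact: iota_ltn_sorted]. Qed.

Lemma head_sorted (s : seq nat) m d : sorted ltn s -> m \in s ->
  head d [seq x <- s | m <= x] = m.
Proof.
elim: s => //= y s IH hs; rewrite in_cons; case: eqP => [-> _|ne /= ms].
  by rewrite leqnn.
have hy : y < m.
  by have := order_path_min ltn_trans hs => /allP /(_ _ ms).
rewrite leqNgt hy /=; exact: IH (path_sorted hs) ms.
Qed.

Lemma pred_ex c a b d : a + d.+1 <= b -> exists2 p, (p == a) || (p \in Ds c a b) &
  (p < a + d.+1 /\ forall x, p < x < a + d.+1 -> x \notin Ds c a b).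
Proof.
elim: d => [|d IH] h.
  exists a; first by rewrite eqxx.
  split; first lia. move=> x; lia.
have [|p hp [hp1 hp2]] := IH; first lia.
have ab : a < b by lia.
case hm: (a + d.+1 \in Ds c a b).
  exists (a + d.+1); first by rewrite hm orbT.
  split; first lia. move=> x hx; lia.
exists p => //; split; first lia.
move=> x hx; have [->|ne] := eqVneq x (a + d.+1); first by rewrite hm.
apply: hp2; lia.
Qed.

Lemma head_pred c a b p m : a < b -> a <= p -> p < m -> m <= b ->
  (forall x, p < x < m -> x \notin Ds c a b) ->
  (m \in Ds c a b) || (m == b) ->
  head b [seq x <- Ds c a b | p < x] = m.
Proof.
move=> ab ap pm mb gap hm.
have -> : [seq x <- Ds c a b | p < x] = [seq x <- Ds c a b | m <= x].
  apply: eq_in_filter => x xD.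
  case: (ltnP x m) => hx.
    have: p < x -> False by move=> px; have := gap x; rewrite px hx xD /=; move/(_ isT).
    by case: (p < x) => // /(_ isT).
  by apply/idP; lia.
case/orP: hm => [mD|/eqP mb'].
  exact: head_sorted (Ds_sorted c a b) mD.
rewrite mb'; suff -> : [seq x <- Ds c a b | b <= x] = [::] by [].
apply/eqP; rewrite -(negbK (_ == _)) -has_filter; apply/hasPn => x.
rewrite memDs //; lia.
Qed.

Lemma head_mem (s : seq nat) d : head d s \in d :: s.
Proof. by case: s => [|y s]; rewrite /= !in_cons eqxx ?orbT. Qed.

Lemma newcol_bound c a b m x : a < b -> b < (size c).-1 -> m < (size c).-1 ->
  x \in newcol c a b m -> x <= pre c (size c).-1.
Proof.
move=> ab bL mL; rewrite /newcol.
have bS : b < size c by lia.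
case: ifP => _.
  rewrite mem_cat => /orP[/mem_take|]; first exact: col_bound.
  have m'L : head b [seq x <- Ds c a b | m < x] < (size c).-1.
    have := head_mem [seq x <- Ds c a b | m < x] b.
    rewrite in_cons => /orP[/eqP -> //|].
    rewrite mem_filter memDs // => /andP[_ /and3P[_ h _]]; lia.
  case: ifP => _.
    rewrite inE => /eqP ->; rewrite -preS //; exact: pre_mono.
  by move/mem_drop; apply: col_bound.
case: ifP => [/eqP hmb|_]; last exact: col_bound.
by move/mem_rem; apply: col_bound; lia.
Qed.

Lemma newcol_last c a b : a < b -> b < (size c).-1 ->
  newcol c a b (size c).-1 = col c (size c).-1.
Proof.
move=> ab bL; rewrite /newcol memDs //.
have -> : ((size c).-1 == a) = false by apply/eqP; lia.
have -> : ((size c).-1 == b) = false by apply/eqP; lia.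
have -> : (size c).-1 < b = false by lia.
by rewrite !andbF.
Qed.

Lemma cover c m x : m <= size c -> 1 <= x <= pre c m ->
  exists2 m0, m0 < m & x \in col c m0.
Proof.
elim: m => [|m IH] hm hx; first by rewrite /pre take0 /= in hx; lia.
case: (leqP x (pre c m)) => h.
  by have [|m0 h1 h2] := IH (ltnW hm); [lia | exists m0 => //; lia].
exists m => //; rewrite mem_col; rewrite preS // in hx; lia.
Qed.

Lemma in_newcol c a b m0 x : neighbouring c a b -> b < (size c).-1 ->
  m0 < (size c).-1 -> x \in col c m0 ->
  exists2 m, m < (size c).-1 & x \in newcol c a b m.
Proof.
case=> ab bS hab _ bL m0L xc.
have pD : forall p, (p == a) || (p \in Ds c a b) -> a <= p.
  by move=> p /orP[/eqP -> //|]; rewrite memDs // => /andP[h _]; lia.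
case D: ((m0 == a) || (m0 \in Ds c a b)).
  move: xc; rewrite -(cat_take_drop (ht c a) (col c m0)) mem_cat => /orP[xt|xd].
    by exists m0 => //; rewrite /newcol D mem_cat xt.
  have hs : ht c a < ht c m0.
    have : 0 < size (drop (ht c a) (col c m0)) by case: (drop _ _) xd.
    rewrite size_drop size_iota; lia.
  have m0D : m0 \in Ds c a b.
    case/orP: D => [/eqP e|//]; by rewrite e ltnn in hs.
  have := m0D; rewrite memDs // => /and3P[am0 m0b _].
  have [|p hp [hp1 hp2]] := @pred_ex c a b (m0 - a).-1; first lia.
  have e : a + (m0 - a).-1.+1 = m0 by lia.
  rewrite e in hp1 hp2.
  exists p; first lia.
  rewrite /newcol hp (head_pred (m:=m0)) ?m0D ?(pD _ hp) //; last exact: ltnW.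
  have -> : (m0 == b) = false by apply/eqP; lia.
  by rewrite mem_cat xd orbT.
case: (eqVneq m0 b) => [e|ne]; last first.
  exists m0 => //; rewrite /newcol D.
  by rewrite (negbTE ne).
subst m0.
case: (eqVneq x (pre c b + ht c b)) => [ex|nx].
  have [|p hp [hp1 hp2]] := @pred_ex c a b (b - a).-1; first lia.
  have e : a + (b - a).-1.+1 = b by lia.
  rewrite e in hp1 hp2.
  exists p; first lia.
  rewrite /newcol hp (head_pred (m:=b)) ?eqxx ?orbT ?(pD _ hp) //.
  by rewrite mem_cat ex inE eqxx orbT.
exists b => //; rewrite /newcol.
have -> : (b == a) = false by apply/eqP; lia.
rewrite memDs // ltnn andbF eqxx /=.
by rewrite (mem_rem_uniq _ (iota_uniq _ _)) inE nx xc.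
Qed.

Lemma core n c a b i j : 2 <= n -> composition n c -> neighbouring c a b ->
  b < (size c).-1 -> in_Bk n c i j -> in_u c a b i j.
Proof.
move=> hn [_ sc] nb bL [/andP[i1 iN] jc ic].
have ab : a < b by case: nb.
have sz : 0 < size c by rewrite lt0n size_eq0; apply/eqP => c0; rewrite c0 /= in sc; lia.
have LS : (size c).-1 < size c by lia.
have preL : pre c (size c).-1 + ht c (size c).-1 = n.
  by rewrite -preS // prednK // /pre take_size.
rewrite mem_col in jc; rewrite mem_col in ic.
have iL : i <= pre c (size c).-1 by lia.
have ew : word c a b = flatten [seq rev (newcol c a b m) | m <- iota 0 (size c).-1]
                       ++ rev (col c (size c).-1).
  rewrite /word -[X in iota 0 X](prednK sz) -addn1 iotaD map_cat flatten_cat /=.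
  by rewrite cats0 add0n newcol_last.
set P := flatten _ in ew.
have jP : j \notin P.
  apply/flatten_mapP => [[m]]; rewrite mem_iota mem_rev => /andP[_ mL].
  move/(newcol_bound ab bL mL); lia.
have iP : i \in P.
  have [|m0 m0L im0] := @cover c (size c).-1 i (ltnW LS); first lia.
  have [m mL im] := in_newcol nb bL m0L im0.
  by apply/flatten_mapP; exists m; rewrite ?mem_iota ?mem_rev.
split; first lia.
rewrite ew !index_cat (negbTE jP) iP.
have := index_mem i P; rewrite iP; lia.
Qed.

Theorem lemma2p9 (n : nat) (c : seq nat) :
  2 <= n -> composition n c ->
  (* (i) *)
  ((forall a b, neighbouring c a b -> b <> (size c).-1 ->
      forall i j, in_Bk n c i j -> in_u c a b i j)
   /\ (forall i j, in_Bk n c i j -> in_u' c i j))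
  /\
  (* (ii) *)
  ((forall m, m < (size c).-1 -> ht c m <> ht c (size c).-1) ->
      forall i j, in_Bk n c i j -> in_upi' c i j).
Proof.
move=> hn hc.
have H1 : forall a b, neighbouring c a b -> b <> (size c).-1 ->
      forall i j, in_Bk n c i j -> in_u c a b i j.
  move=> a b nb bL i j hB; have bS : b < size c by case: nb.
  apply: core hn hc nb _ hB; lia.
split; first by split; [exact: H1 | move=> i j hB a b nb bL; exact: H1].
move=> hht i j hB a b nb; have [ab _ hab _] := nb; apply: H1 nb _ _ _ hB => eb.
 apply: (hht a); [lia | by rewrite hab eb].
Qed.
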